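(* Let $0<p\leq 1$, let $A\in\mathbb{R}^{m\times N}$ with $N=nd$, and let $x\in\mathbb{R}^N$ be block $k$-sparse with block support $T_0$, and $y=Ax$. Let $\tilde T\subset\{1,\dots,n\}$ be an arbitrary set, and define $\rho,\alpha\geq 0$ by $|\tilde T|=\rho k$ and $|\tilde T\cap T_0|=\alpha\rho k$. Let $0\leq\omega\leq 1$ and set $\gamma=\omega+(1-\omega)(1+\rho-2\alpha\rho)^{1-p/2}$. Suppose there exists an integer $a$ with $a\geq(1-\alpha)\rho$ and $a>1$ such that $$\delta_{ak}+\frac{a^{1-p/2}}{\gamma}\delta_{(a+1)k}<\frac{a^{1-p/2}}{\gamma}-1 .$$ Then $x$ is the unique solution of $$\min_{z\in\mathbb{R}^N}\sum_{i=1}^n w_i\lVert z[i]\rVert_2^p\quad\text{subject to}\quad Az=y,\qquad w_i=\begin{cases}\omega,& i\in\tilde T\\ 1,& i\in\tilde T^c.\end{cases}$$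
   Context: Vectors $x\in\mathbb{R}^N$, $N=nd$, are split into $n$ consecutive blocks of length $d$: $x[i]=(x_{(i-1)d+1},\dots,x_{id})^T$, $i=1,\dots,n$. A vector is block $k$-sparse if at most $k$ blocks $x[i]$ are nonzero; its block support is the set of indices $i$ with $x[i]\neq 0$. For $v\in\mathbb{R}^m$, $\lVert v\rVert_p^p=\sum_{i=1}^m|v_i|^p$. The block $p$-restricted isometry constant $\delta_k$ of $A$ (of order $k$) is the smallest positive number such that $(1-\delta_k)\lVert z\rVert_2^p\leq\lVert Az\rVert_p^p\leq(1+\delta_k)\lVert z\rVert_2^p$ for all block $k$-sparse $z\in\mathbb{R}^N$. *)

(* Defs.v *)
From HB Require Import structures.
From mathcomp Require Import all_boot all_order all_algebra.
From mathcomp Require Import classical_sets reals exp.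
Set Implicit Arguments. Unset Strict Implicit. Unset Printing Implicit Defensive.
Import Order.TTheory GRing.Theory Num.Theory.
Local Open Scope ring_scope.
Local Open Scope classical_set_scope.

Section BlockDefs.
Variable R : realType.

Lemma blk_idx_proof (n d : nat) (i : 'I_n) (j : 'I_d) : (i * d + j < n * d)%N.
Proof.
case: i => i /= Hi; case: j => j /= Hj.
apply: (@leq_trans (i * d + d)); first by rewrite ltn_add2l.
by rewrite -mulSnr leq_mul2r Hi orbT.
Qed.

Definition blk_idx (n d : nat) (i : 'I_n) (j : 'I_d) : 'I_(n * d) :=
  Ordinal (blk_idx_proof i j).

Definition blk (n d : nat) (x : 'cV[R]_(n * d)) (i : 'I_n) : 'rV[R]_d :=
  \row_(j < d) x (blk_idx i j) 0.

Definition l2normr (d : nat) (v : 'rV[R]_d) : R := Num.sqrt (\sum_j v 0 j ^+ 2).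
Definition l2normc (N : nat) (v : 'cV[R]_N) : R := Num.sqrt (\sum_i v i 0 ^+ 2).

Definition pnormp (m : nat) (p : R) (v : 'cV[R]_m) : R := \sum_i powR `|v i 0| p.

Definition block_support (n d : nat) (x : 'cV[R]_(n * d)) : {set 'I_n} :=
  [set i | blk x i != 0].

Definition block_sparse (n d : nat) (k : nat) (x : 'cV[R]_(n * d)) : Prop :=
  (#|block_support x| <= k)%N.

Definition block_pRIC (m n d : nat) (p : R) (A : 'M[R]_(m, n * d)) (s : nat) : R :=
  inf [set delta : R | 0 < delta /\
        forall z : 'cV[R]_(n * d), block_sparse s z ->
          (1 - delta) * powR (l2normc z) p <= pnormp p (A *m z) /\
          pnormp p (A *m z) <= (1 + delta) * powR (l2normc z) p].

Definition wobj (n d : nat) (p : R) (w : 'I_n -> R) (z : 'cV[R]_(n * d)) : R :=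
  \sum_i w i * powR (l2normr (blk z i)) p.

End BlockDefs.

(* Main.v *)
Require Import Defs.
From HB Require Import structures.
From mathcomp Require Import all_boot all_order all_algebra.
From mathcomp Require Import classical_sets reals exp.
From mathcomp Require Import ring lra zify.
Import Order.TTheory GRing.Theory Num.Theory.
Local Open Scope ring_scope.

Set Implicit Arguments. Unset Strict Implicit. Unset Printing Implicit Defensive.

Section Scalar.
Variable R : realType.
Implicit Types a b p q t : R.

Lemma le_powR_self p t : 0 < p -> p <= 1 -> 0 <= t <= 1 -> t <= powR t p.
Proof.
move=> p0 p1 /andP[t0 t1]; have [->|tn0] := eqVneq t 0; first by rewrite powR_ge0.
by apply: ger1_powR => //; rewrite t1 andbT lt_neqAle eq_sym tn0.
Qed.

Lemma powR_mono p a b : 0 <= p -> 0 <= a -> a <= b -> powR a p <= powR b p.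
Proof.
move=> p0 a0 ab; apply: ge0_ler_powR => //; rewrite nnegrE //; exact: le_trans ab.
Qed.

Lemma powR_subadd p a b : 0 < p -> p <= 1 -> 0 <= a -> 0 <= b ->
  powR (a + b) p <= powR a p + powR b p.
Proof.
move=> p0 p1 a0 b0.
have [s0|sn0] := eqVneq (a + b) 0.
  by rewrite s0 powR0 ?gt_eqF // addr_ge0 // powR_ge0.
have sp : 0 < a + b by rewrite lt_neqAle eq_sym sn0 addr_ge0.
have ha : a = (a + b) * (a / (a + b)) by rewrite mulrC divfK.
have hb : b = (a + b) * (b / (a + b)) by rewrite mulrC divfK.
have ea : a / (a + b) <= powR (a / (a + b)) p.
  apply: le_powR_self => //; rewrite divr_ge0 ?ler_pdivrMr //= ?(ltW sp) // mul1r.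
  by rewrite lerDl.
have eb : b / (a + b) <= powR (b / (a + b)) p.
  apply: le_powR_self => //; rewrite divr_ge0 ?ler_pdivrMr //= ?(ltW sp) // mul1r.
  by rewrite lerDr.
rewrite [X in _ <= powR X p + _]ha [X in _ <= _ + powR X p]hb.
rewrite (powRM _ (ltW sp)) ?divr_ge0 ?(ltW sp) // (powRM _ (ltW sp)) ?divr_ge0 ?(ltW sp) // -mulrDr.
rewrite -{1}[powR (a + b) p]mulr1 ler_wpM2l ?powR_ge0 //.
apply: le_trans (lerD ea eb); rewrite -mulrDl divff //.
Qed.

Lemma powR_sum_subadd p (I : Type) (r : seq I) (P : pred I) (c : I -> R) :
  0 < p -> p <= 1 ->
  powR `|\sum_(i <- r | P i) c i| p <= \sum_(i <- r | P i) powR `|c i| p.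
Proof.
move=> p0 p1; apply: (big_rec2 (fun x y => powR `|x| p <= y)).
  by rewrite normr0 powR0 ?gt_eqF.
move=> i y1 y2 _ H.
have h1 := powR_mono (ltW p0) (normr_ge0 (c i + y1)) (ler_normD (c i) y1).
have h2 := powR_subadd p0 p1 (normr_ge0 (c i)) (normr_ge0 y1).
lra.
Qed.

Lemma bernoulli_powR q u : 0 < q -> q < 1 -> 0 <= u -> powR u q <= q * u + (1 - q).
Proof.
move=> q0 q1 u0.
have := @conjugate_powR R (powR u q) 1 (q^-1) ((1 - q)^-1) (powR_ge0 _ _) ler01.
rewrite invr_gt0 q0 invr_gt0 subr_gt0 q1 !invrK addrC subrK => /(_ isT isT erefl).
by rewrite mulr1 -powRrM mulfV ?gt_eqF // powRr1 // powR1 mul1r mulrC.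
Qed.

Lemma holder_powR q (I : finType) (S : {pred I}) (g : I -> R) :
  0 < q -> q < 1 -> (forall i, 0 <= g i) ->
  \sum_(i in S) powR (g i) q <=
    powR (#|S|%:R) (1 - q) * powR (\sum_(i in S) g i) q.
Proof.
move=> q0 q1 g0.
set s := \sum_(i in S) g i.
have s0 : 0 <= s by rewrite sumr_ge0.
have [se0|sn0] := eqVneq s 0.
  rewrite big1 ?mulr_ge0 ?powR_ge0 // => i iS.
  by rewrite (psumr_eq0P (fun i _ => g0 i) se0 iS) powR0 ?gt_eqF.
have sp : 0 < s by rewrite lt_neqAle eq_sym sn0.
have cp : (0 < #|S|)%N.
  rewrite lt0n; apply/negP => /eqP c0; move: sn0; rewrite /s.
  by rewrite big_pred0 ?eqxx // => i; apply/negbTE/negP => iS; move/card0_eq: c0 => /(_ i); rewrite inE iS.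
set c := (#|S|%:R : R).
have c0 : 0 < c by rewrite ltr0n.
set M := s / c.
have M0 : 0 < M by rewrite divr_gt0.
have step : forall i, powR (g i) q <= powR M q * (q * (g i / M) + (1 - q)).
  move=> i; have -> : g i = M * (g i / M) by rewrite mulrC divfK ?gt_eqF.
  rewrite powRM ?(ltW M0) ?divr_ge0 ?(ltW M0) // ler_wpM2l ?powR_ge0 //.
  rewrite [M * _]mulrC divfK ?gt_eqF //.
  by apply: bernoulli_powR => //; rewrite divr_ge0 // ltW.
apply: le_trans (ler_sum _ (fun i _ => step i)) _.
rewrite -mulr_sumr big_split /= -mulr_sumr -mulr_suml sumr_const.
rewrite -/s -/c.
have -> : q * (s / M) + (1 - q) *+ #|S| = c.
  rewrite /M invf_div [s * _]mulrC divfK ?gt_eqF // -mulr_natr -/c; ring.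
rewrite /M powRM ?invr_ge0 ?(ltW c0) ?(ltW sp) // -powR_inv1 ?(ltW c0) // -powRrM.
rewrite mulrC mulrA mulN1r -mulrA [powR s q * _]mulrC mulrA.
rewrite -{1}(powRr1 (ltW c0)) -powRD; last by rewrite (gt_eqF c0) implybT.
by [].
Qed.

End Scalar.

Section Rows.
Variable R : realType.

Lemma l2normr_ge0 d (v : 'rV[R]_d) : 0 <= l2normr v.
Proof. exact: sqrtr_ge0. Qed.

Lemma l2normr_sq d (v : 'rV[R]_d) : l2normr v ^+ 2 = \sum_j v 0 j ^+ 2.
Proof. by rewrite /l2normr sqr_sqrtr // sumr_ge0 // => j _; rewrite sqr_ge0. Qed.

Lemma cauchy_schwarz d (u v : 'rV[R]_d) :
  \sum_j u 0 j * v 0 j <= l2normr u * l2normr v.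
Proof.
set r := l2normr u; set s := l2normr v; set C := \sum_j u 0 j * v 0 j.
have r0 : 0 <= r := l2normr_ge0 u. have s0 : 0 <= s := l2normr_ge0 v.
have E : \sum_j (s * u 0 j - r * v 0 j) ^+ 2 = 2 * (r * s) * (r * s - C).
  have -> : \sum_j (s * u 0 j - r * v 0 j) ^+ 2 =
      \sum_j (s ^+ 2 * u 0 j ^+ 2 + r ^+ 2 * v 0 j ^+ 2 - 2 * (r * s) * (u 0 j * v 0 j)).
    by apply: eq_bigr => j _; ring.
  rewrite big_split /= big_split /= -!mulr_sumr sumrN -mulr_sumr.
  rewrite -!l2normr_sq -/r -/s -/C; ring.
have : 0 <= 2 * (r * s) * (r * s - C) by rewrite -E sumr_ge0 // => j _; rewrite sqr_ge0.
have [rs0|rsp] := eqVneq (r * s) 0.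
  move=> _; move/eqP: rs0; rewrite mulf_eq0 => /orP[] /eqP h0.
  - have hu : forall j, u 0 j = 0.
      move=> j; have : \sum_j u 0 j ^+ 2 = 0 by rewrite -l2normr_sq -/r h0 expr0n.
      by move/(psumr_eq0P (fun j _ => sqr_ge0 (u 0 j))) => /(_ j isT) /eqP; rewrite sqrf_eq0 => /eqP.
    by rewrite /C big1 ?mulr_ge0 // => j _; rewrite hu mul0r.
  - have hv : forall j, v 0 j = 0.
      move=> j; have : \sum_j v 0 j ^+ 2 = 0 by rewrite -l2normr_sq -/s h0 expr0n.
      by move/(psumr_eq0P (fun j _ => sqr_ge0 (v 0 j))) => /(_ j isT) /eqP; rewrite sqrf_eq0 => /eqP.
    by rewrite /C big1 ?mulr_ge0 // => j _; rewrite hv mulr0.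
have rsp' : 0 < r * s by rewrite lt_neqAle eq_sym rsp mulr_ge0.
by rewrite pmulr_rge0 ?subr_ge0 // mulr_gt0.
Qed.

Lemma l2normr_triangle d (u v : 'rV[R]_d) : l2normr (u + v) <= l2normr u + l2normr v.
Proof.
have h0 : 0 <= l2normr u + l2normr v by rewrite addr_ge0 ?l2normr_ge0.
have key : l2normr (u + v) ^+ 2 <= (l2normr u + l2normr v) ^+ 2.
  rewrite l2normr_sq.
  have -> : \sum_j (u + v) 0 j ^+ 2 =
      \sum_j u 0 j ^+ 2 + \sum_j v 0 j ^+ 2 + 2 * \sum_j u 0 j * v 0 j.
    rewrite mulr_sumr -!big_split /=; apply: eq_bigr => j _; rewrite mxE; ring.
  rewrite -!l2normr_sq.
  have := cauchy_schwarz u v => cs.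
  nra.
by rewrite -(ler_pXn2r (_ : (0 < 2)%N)) // nnegrE ?l2normr_ge0.
Qed.

Lemma l2normrN d (v : 'rV[R]_d) : l2normr (- v) = l2normr v.
Proof. by rewrite /l2normr; congr Num.sqrt; apply: eq_bigr => j _; rewrite mxE sqrrN. Qed.

Lemma l2normr_eq0 d (v : 'rV[R]_d) : l2normr v = 0 -> v = 0.
Proof.
move=> h; apply/matrixP => i j; rewrite mxE.
have : \sum_j v 0 j ^+ 2 = 0 by rewrite -l2normr_sq h expr0n.
move/(psumr_eq0P (fun j _ => sqr_ge0 (v 0 j))) => /(_ j isT) /eqP.
by rewrite sqrf_eq0 => /eqP; rewrite (ord1 i).
Qed.

End Rows.

Section Blocks.
Variable R : realType.
Variables n d : nat.

Lemma bof_proof (t : 'I_(n * d)) : (t %/ d < n)%N.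
Proof.
case: t => t /=; case: d => [|d'] Ht; first by rewrite muln0 in Ht.
by rewrite ltn_divLR.
Qed.

Definition bof (t : 'I_(n * d)) : 'I_n := Ordinal (bof_proof t).

Lemma bof_blk (i : 'I_n) (j : 'I_d) : bof (blk_idx i j) = i.
Proof.
apply: val_inj => /=; have d0 : (0 < d)%N by case: j => j /=; case: d => //.
by rewrite divnMDl // divn_small ?addn0.
Qed.

Lemma blk_idx_inj : injective (fun p : 'I_n * 'I_d => blk_idx p.1 p.2).
Proof.
move=> [i j] [i' j'] /= h.
have hi : i = i' by rewrite -(bof_blk i j) h bof_blk.
subst i'; congr pair; apply: val_inj.
by move: h => /(congr1 val) /= /eqP; rewrite eqn_add2l => /eqP.
Qed.

Lemma sum_blocks (F : 'I_(n * d) -> R) :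
  \sum_t F t = \sum_(i < n) \sum_(j < d) F (blk_idx i j).
Proof.
rewrite pair_bigA /=.
have hb : bijective (fun p : 'I_n * 'I_d => blk_idx p.1 p.2).
  by apply: inj_card_bij; [exact: blk_idx_inj | rewrite card_prod !card_ord].
by rewrite (reindex _ (onW_bij _ hb)).
Qed.

Definition restr (S : {set 'I_n}) (h : 'cV[R]_(n * d)) : 'cV[R]_(n * d) :=
  \col_t (if bof t \in S then h t 0 else 0).

Lemma blk_restr (S : {set 'I_n}) (h : 'cV[R]_(n * d)) i : blk (restr S h) i = if i \in S then blk h i else 0.
Proof.
by apply/rowP => j; rewrite !mxE bof_blk; case: ifP => _; rewrite ?mxE.
Qed.

Lemma blkB (z x : 'cV[R]_(n * d)) i : blk (z - x) i = blk z i - blk x i.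
Proof. by apply/rowP => j; rewrite !mxE. Qed.

Definition Qs (S : {set 'I_n}) (h : 'cV[R]_(n * d)) : R :=
  \sum_(i in S) l2normr (blk h i) ^+ 2.

Lemma l2normc_restr (S : {set 'I_n}) (h : 'cV[R]_(n * d)) : l2normc (restr S h) = Num.sqrt (Qs S h).
Proof.
rewrite /l2normc /Qs sum_blocks; congr Num.sqrt.
rewrite [RHS]big_mkcond /=; apply: eq_bigr => i _.
have := blk_restr S h i; case: ifP => iS hb.
  rewrite l2normr_sq; apply: eq_bigr => j _.
  by rewrite -hb /blk mxE.
apply: big1 => j _; have := congr1 (fun v : 'rV_d => v 0 j) hb.
by rewrite /= !mxE => ->; rewrite expr0n.
Qed.

Lemma restrT (h : 'cV[R]_(n * d)) : restr [set: 'I_n] h = h.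
Proof. by apply/colP => t; rewrite mxE inE. Qed.

Lemma restr_sparse (S : {set 'I_n}) (h : 'cV[R]_(n * d)) s : (#|S| <= s)%N -> block_sparse s (restr S h).
Proof.
move=> hS; apply: (leq_trans _ hS); apply: subset_leq_card.
apply/fintype.subsetP => i; rewrite inE blk_restr; case: ifP => //; by rewrite eqxx.
Qed.

Lemma Qs_ge0 (S : {set 'I_n}) (h : 'cV[R]_(n * d)) : 0 <= Qs S h.
Proof. by rewrite /Qs sumr_ge0 // => i _; rewrite sqr_ge0. Qed.

Lemma powR_l2normc_restr p (S : {set 'I_n}) (h : 'cV[R]_(n * d)) :
  powR (l2normc (restr S h)) p = powR (Qs S h) (p / 2).
Proof.
by rewrite l2normc_restr -powR12_sqrt ?Qs_ge0 // -powRrM mulrC.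
Qed.

Lemma powR_sq_half p (x : R) : 0 <= x -> powR (x ^+ 2) (p / 2) = powR x p.
Proof.
move=> x0; rewrite -powR_mulrn // -powRrM; congr powR.
by rewrite mulrC -mulrA mulVf ?mulr1 // pnatr_eq0.
Qed.

End Blocks.

Section RIC.
Local Open Scope classical_set_scope.
Variable R : realType.
Variables m n d : nat.
Variable p : R.
Hypothesis p0 : 0 < p.
Hypothesis p1 : p <= 1.
Variable A : 'M[R]_(m, n * d).

Definition ricset (s : nat) : set R :=
  [set delta : R | 0 < delta /\
        forall z : 'cV[R]_(n * d), block_sparse s z ->
          (1 - delta) * powR (l2normc z) p <= pnormp p (A *m z) /\
          pnormp p (A *m z) <= (1 + delta) * powR (l2normc z) p].

Lemma pRIC_E s : block_pRIC p A s = inf (ricset s).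
Proof. by []. Qed.

Lemma pnormp_ge0 k (v : 'cV[R]_k) : 0 <= pnormp p v.
Proof. by rewrite /pnormp sumr_ge0 // => i _; rewrite powR_ge0. Qed.

Lemma entry_le_l2normc N (z : 'cV[R]_N) t : `|z t 0| <= l2normc z.
Proof.
rewrite -sqrtr_sqr /l2normc ler_sqrt; last by rewrite sumr_ge0 // => i _; rewrite sqr_ge0.
by rewrite (bigD1 t) //= lerDl sumr_ge0 // => i _; rewrite sqr_ge0.
Qed.

Lemma pnormp_bound (z : 'cV[R]_(n * d)) :
  pnormp p (A *m z) <= (\sum_i \sum_j powR `|A i j| p) * powR (l2normc z) p.
Proof.
rewrite /pnormp mulr_suml; apply: ler_sum => i _.
rewrite mxE mulr_suml.
apply: le_trans (powR_sum_subadd _ _ _ p0 p1) _.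
apply: ler_sum => j _; rewrite normrM powRM //.
rewrite ler_wpM2l ?powR_ge0 //; apply: powR_mono; [exact: ltW | exact: normr_ge0 | exact: entry_le_l2normc].
Qed.

Lemma ricset_nonempty s : ricset s !=set0.
Proof.
set M := \sum_i \sum_j powR `|A i j| p.
have M0 : 0 <= M by rewrite sumr_ge0 // => i _; rewrite sumr_ge0 // => j _; rewrite powR_ge0.
exists (2 + M); split; first by rewrite ltr_wpDr.
move=> z _; split.
  apply: le_trans (pnormp_ge0 _); rewrite mulr_le0_ge0 ?powR_ge0 //; lra.
apply: le_trans (pnormp_bound z) _; rewrite ler_wpM2r ?powR_ge0 // -/M; lra.
Qed.

Lemma ricset_lb s : lbound (ricset s) 0.
Proof. by move=> x [/ltW]. Qed.

Lemma pRIC_ge0 s : 0 <= block_pRIC p A s.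
Proof. by rewrite pRIC_E; apply: lb_le_inf; [exact: ricset_nonempty | exact: ricset_lb]. Qed.

Lemma pRIC_approx s eps : 0 < eps -> exists2 e, ricset s e & e < block_pRIC p A s + eps.
Proof.
move=> e0; rewrite pRIC_E; apply: inf_adherent => //; split.
  exact: ricset_nonempty.
by exists 0; exact: ricset_lb.
Qed.

End RIC.

Section SumCmp.
Variable R : realType.

Lemma sum_cmp (I : finType) (X Y : {set I}) (g : I -> R) :
  (forall i, 0 <= g i) -> (#|X| <= #|Y|)%N ->
  (forall x y, x \in X -> y \in Y -> g x <= g y) ->
  \sum_(i in X) g i <= \sum_(i in Y) g i.
Proof.
move=> g0 hc hxy.
have [Y0|Yp] := posnP #|Y|.
  have X0 : #|X| = 0%N by apply/eqP; rewrite -leqn0 -Y0.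
  rewrite (eq_bigl (fun _ => false)); last by move=> i; move/card0_eq: X0 => ->.
  by rewrite big_pred0_eq sumr_ge0.
have key : #|Y|%:R * \sum_(i in X) g i <= #|X|%:R * \sum_(i in Y) g i.
  rewrite mulr_sumr mulr_sumr.
  have -> : \sum_(i in X) #|Y|%:R * g i = \sum_(i in X) \sum_(j in Y) g i.
    by apply: eq_bigr => i _; rewrite sumr_const mulr_natl.
  have -> : \sum_(i in Y) #|X|%:R * g i = \sum_(j in Y) \sum_(i in X) g j.
    by apply: eq_bigr => i _; rewrite sumr_const mulr_natl.
  rewrite [X in _ <= X]exchange_big /=.
  by apply: ler_sum => i iX; apply: ler_sum => j jY; apply: hxy.
have hY : (0 : R) < #|Y|%:R by rewrite ltr0n.
rewrite -(ler_pM2l hY); apply: le_trans key _.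
rewrite ler_wpM2r ?ler_nat // sumr_ge0 //.
Qed.

End SumCmp.

Section Groups.
Variable R : realType.
Variable n : nat.
Variable f : 'I_n -> R.
Variable U : {set 'I_n}.
Variable K : nat.
Hypothesis K0 : (0 < K)%N.

Definition rf := fun i j : 'I_n => f j <= f i.
Definition eseq := sort rf (enum U).
Definition pos (i : 'I_n) := index i eseq.
Definition G (j : nat) : {set 'I_n} := [set i in U | (pos i %/ K == j)%N].

Lemma eseq_uniq : uniq eseq.
Proof. by rewrite sort_uniq enum_uniq. Qed.

Lemma mem_eseq i : (i \in eseq) = (i \in U).
Proof. by rewrite mem_sort mem_enum. Qed.

Lemma size_eseq : size eseq = #|U|.
Proof. by rewrite size_sort cardE. Qed.

Lemma eseq_sorted : sorted rf eseq.
Proof. by apply: sort_sorted => x y; rewrite /rf le_total. Qed.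

Lemma rf_trans : transitive rf.
Proof. by move=> y x z; rewrite /rf => h1 h2; apply: le_trans h2 h1. Qed.

Lemma inG i j : (i \in G j) = (i \in U) && (pos i %/ K == j)%N.
Proof. by rewrite inE. Qed.

Lemma G_order j j' x y : (j < j')%N -> x \in G j' -> y \in G j -> f x <= f y.
Proof.
move=> jj'; rewrite !inG => /andP[xU /eqP hx] /andP[yU /eqP hy].
have hxy : (pos y < pos x)%N.
  rewrite ltnNge; apply/negP => le; move: (leq_div2r K le); rewrite hx hy.
  by rewrite leqNgt jj'.
have := @sorted_ltn_nth _ rf rf_trans x eseq eseq_sorted (pos y) (pos x).
rewrite !inE /pos !index_mem !mem_eseq xU yU => /(_ isT isT hxy).
by rewrite !nth_index ?mem_eseq.
Qed.

Lemma G_card j : (#|G j| <= K)%N.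
Proof.
pose phi (i : 'I_n) : 'I_K := Ordinal (ltn_pmod (pos i) K0).
rewrite -(card_in_imset (f := phi)); first by apply: (leq_trans (max_card _)); rewrite card_ord.
move=> a b; rewrite !inG => /andP[aU /eqP ha] /andP[bU /eqP hb] /(congr1 val) /= hab.
have : pos a = pos b by rewrite (divn_eq (pos a) K) (divn_eq (pos b) K) ha hb hab.
move=> /(congr1 (nth a eseq)); rewrite /pos !nth_index ?mem_eseq //.
Qed.

Lemma G_full j j' x : (j < j')%N -> x \in G j' -> #|G j| = K.
Proof.
move=> jj' xG; apply/eqP; rewrite eqn_leq G_card /=.
have xU : x \in U by move: xG; rewrite inG => /andP[].
have hx : (j' * K <= pos x)%N.
  by move: xG; rewrite inG => /andP[_ /eqP <-]; rewrite leq_trunc_div.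
have hsz : (pos x < size eseq)%N by rewrite /pos index_mem mem_eseq.
pose psi (u : 'I_K) : 'I_n := nth x eseq (j * K + u).
have hlt : forall u : 'I_K, (j * K + u < size eseq)%N.
  move=> u; apply: leq_trans hsz; apply: leq_trans hx.
  apply: (@leq_trans (j.+1 * K)); first by rewrite mulSnr leq_add2l ltnW.
  by rewrite leq_mul2r jj' orbT.
have psi_inj : injective psi.
  move=> u v /eqP; rewrite /psi nth_uniq ?hlt ?eseq_uniq // eqn_add2l => /eqP.
  exact: val_inj.
rewrite -{1}[K]card_ord -(card_imset _ psi_inj).
apply: subset_leq_card; apply/fintype.subsetP => i /imsetP [u _ ->].
rewrite inG -mem_eseq mem_nth ?hlt //= /pos index_uniq ?hlt ?eseq_uniq //.
by rewrite divnMDl // divn_small ?addn0.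
Qed.

Lemma pos_div_lt i : i \in U -> (pos i %/ K < n.+1)%N.
Proof.
move=> iU; apply: (@leq_ltn_trans (pos i)); first exact: leq_div.
have : (pos i < size eseq)%N by rewrite /pos index_mem mem_eseq.
rewrite size_eseq => h; apply: (leq_trans h); apply: (leq_trans (max_card _)).
by rewrite card_ord.
Qed.

Lemma sum_G (V : nmodType) (i : 'I_n) (c : V) :
  \sum_(j < n.+1) (if i \in G j then c else 0) = if i \in U then c else 0.
Proof.
case: (boolP (i \in U)) => iU.
  rewrite -big_mkcond /= (big_pred1 (Ordinal (pos_div_lt iU))) //.
  by move=> j; rewrite inG iU /= /pred1 /= eq_sym; apply/eqP/eqP => [h|->] //; apply: val_inj.
by apply: big1 => j _; rewrite inG (negbTE iU).
Qed.

Lemma G_sub j : G j \subset U.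
Proof. by apply/fintype.subsetP => i; rewrite inG => /andP[]. Qed.

Hypothesis f0 : forall i, 0 <= f i.

Lemma G_largest (g : 'I_n -> R) (B : {set 'I_n}) :
  (forall i, 0 <= g i) -> (forall x y, f x <= f y -> g x <= g y) ->
  B \subset U -> (#|B| <= K)%N ->
  \sum_(i in B) g i <= \sum_(i in G 0) g i.
Proof.
move=> g0 gm BU BK.
rewrite (big_setID (G 0)) [X in _ <= X](big_setID B) /= finset.setIC.
rewrite lerD2l.
case: (set_0Vmem (B :\: G 0)) => [->|[x]].
  by rewrite big_set0 sumr_ge0.
rewrite finset.in_setD => /andP[xG0 xB].
have xU : x \in U by move/fintype.subsetP: BU; apply.
have hfull : #|G 0| = K.
  apply: (@G_full 0 (pos x %/ K)%N x).
    by rewrite lt0n; apply: contra xG0 => /eqP h; rewrite inG xU h.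
  by rewrite inG xU eqxx.
apply: sum_cmp => //.
  have h1 := cardsID (G 0) B; have h2 := cardsID B (G 0).
  rewrite finset.setIC in h2.
  move: h1 h2 BK hfull; move: #|B :&: G 0| #|B :\: G 0| #|G 0 :\: B| #|B| #|G 0| => a b c d e; lia.
move=> y z; rewrite !finset.in_setD => /andP[yG0 yB] /andP[zB zG0]; apply: gm.
have yU : y \in U by move/fintype.subsetP: BU; apply.
apply: (@G_order 0 (pos y %/ K)%N) => //.
  by rewrite lt0n; apply: contra yG0 => /eqP h; rewrite inG yU h.
by rewrite inG yU eqxx.
Qed.

Lemma G_tail p j : 0 < p ->
  powR (\sum_(i in G j.+1) f i ^+ 2) (p / 2) <=
    powR K%:R (p / 2 - 1) * \sum_(i in G j) powR (f i) p.
Proof.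
move=> p0.
set F := \sum_(i in G j) powR (f i) p.
have KR : (0 : R) < K%:R by rewrite ltr0n.
set c := powR (F / K%:R) (2 / p).
have per : forall x, x \in G j.+1 -> f x ^+ 2 <= c.
  move=> x xG.
  have hK : K%:R * powR (f x) p <= F.
    rewrite -(G_full (ltnSn j) xG) mulr_natl -sumr_const.
    apply: ler_sum => y yG; apply: powR_mono; [exact: ltW | exact: f0|].
    exact: (G_order (ltnSn j) xG yG).
  have h1 : powR (f x) p <= F / K%:R by rewrite ler_pdivlMr // mulrC.
  have -> : f x ^+ 2 = powR (powR (f x) p) (2 / p).
    by rewrite -powRrM mulrCA divff ?gt_eqF // mulr1 powR_mulrn.
  by apply: powR_mono => //; [rewrite divr_ge0 // ltW | exact: powR_ge0].
have c0 : 0 <= c by exact: powR_ge0.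
have hs : \sum_(i in G j.+1) f i ^+ 2 <= K%:R * c.
  apply: le_trans (ler_sum _ per) _.
  by rewrite sumr_const -[c *+ _]mulr_natl ler_wpM2r // ler_nat G_card.
apply: le_trans (powR_mono _ (sumr_ge0 _ (fun i _ => sqr_ge0 (f i))) hs) _.
  by rewrite divr_ge0 // ltW.
have e2 : 2 / p * (p / 2) = 1.
  have pn : p != 0 by rewrite gt_eqF.
  have tn : (2 : R) != 0 by rewrite pnatr_eq0.
  by field.
rewrite powRM ?(ltW KR) // /c -powRrM e2.
have F0 : 0 <= F by rewrite /F sumr_ge0 // => i _; exact: powR_ge0.
rewrite powRr1 ?divr_ge0 ?(ltW KR) //.
rewrite powRB; last by rewrite (gt_eqF KR) implybT.
by rewrite powRr1 ?(ltW KR) // [X in _ <= X]mulrAC -mulrA.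
Qed.

End Groups.

Section Extra.
Variable R : realType.

Lemma pnormpN k p (v : 'cV[R]_k) : pnormp p (- v) = pnormp p v.
Proof. by rewrite /pnormp; apply: eq_bigr => i _; rewrite mxE normrN. Qed.

Lemma pnormp_sum k p (I : finType) (v : I -> 'cV[R]_k) : 0 < p -> p <= 1 ->
  pnormp p (\sum_j v j) <= \sum_j pnormp p (v j).
Proof.
move=> p0 p1; rewrite /pnormp exchange_big /=; apply: ler_sum => i _.
by rewrite summxE; apply: powR_sum_subadd.
Qed.

Lemma sum_setU_disj (I : finType) (A B : {set I}) (F : I -> R) :
  [disjoint A & B] -> \sum_(i in A :|: B) F i = \sum_(i in A) F i + \sum_(i in B) F i.
Proof.
move=> dAB; rewrite -bigU //; apply: eq_bigl => i; by rewrite finset.in_setU.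
Qed.

Lemma l2normr0 dd : l2normr (0 : 'rV[R]_dd) = 0.
Proof. by rewrite /l2normr big1 ?sqrtr0 // => j _; rewrite mxE expr0n. Qed.


Definition Fp n (f : 'I_n -> R) p (S : {set 'I_n}) := \sum_(i in S) powR (f i) p.

Lemma Fp_ge0 n (f : 'I_n -> R) p S : 0 <= Fp f p S.
Proof. by rewrite /Fp sumr_ge0 // => i _; exact: powR_ge0. Qed.

Lemma stepA n d (x z : 'cV[R]_(n * d)) p omega (Tt : {set 'I_n}) :
  0 < p -> p <= 1 -> 0 <= omega -> omega <= 1 ->
  wobj p (fun i => if i \in Tt then omega else 1) z <=
  wobj p (fun i => if i \in Tt then omega else 1) x ->
  Fp (fun i => l2normr (blk (z - x) i)) p (~: block_support x) <=
   omega * Fp (fun i => l2normr (blk (z - x) i)) p (block_support x) +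
   (1 - omega) * Fp (fun i => l2normr (blk (z - x) i)) p
      ((block_support x :\: Tt) :|: (~: block_support x :&: Tt)).
Proof.
move=> p0 p1 om0 om1 hle.
pose w := fun i : 'I_n => if i \in Tt then omega else 1.
pose T0 := block_support x.
pose U := ~: T0.
pose h := z - x.
pose f := fun i => l2normr (blk h i).
rewrite -/T0 -/U -/h -/f.
have inU : forall i, (i \in U) = (i \notin T0) by move=> i; rewrite finset.in_setC.
have bx0 : forall i, i \in U -> blk x i = 0.
  by move=> i; rewrite inU /T0 /block_support inE negbK => /eqP.
have bzU : forall i, i \in U -> l2normr (blk z i) = f i.
  by move=> i iU; rewrite /f /h blkB bx0 // subr0.
have bzT : forall i, powR (l2normr (blk x i)) p <= powR (l2normr (blk z i)) p + powR (f i) p.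
  move=> i; have e : blk x i = blk z i + - blk h i by rewrite /h blkB opprB addrC subrK.
  have t := l2normr_triangle (blk z i) (- blk h i); rewrite -e l2normrN in t.
  apply: le_trans (powR_mono (ltW p0) (l2normr_ge0 _) t) _.
  exact: powR_subadd (l2normr_ge0 _) (l2normr_ge0 _).
pose g := fun i => w i * powR (f i) p.
have w0 : forall i, 0 <= w i by move=> i; rewrite /w; case: ifP.
have term : forall i, w i * powR (l2normr (blk x i)) p +
    ((if i \in U then g i else 0) - (if i \in T0 then g i else 0))
    <= w i * powR (l2normr (blk z i)) p.
  move=> i; rewrite inU; case: (boolP (i \in T0)) => iT /=.
    rewrite sub0r /g -mulrN -mulrDr ler_wpM2l //; have := bzT i.
    move: (powR (l2normr (blk x i)) p) (powR (l2normr (blk z i)) p) (powR (f i) p).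
    move=> u v t' H; lra.
  have iU : i \in U by rewrite inU iT.
  by rewrite bx0 // l2normr0 powR0 ?gt_eqF // mulr0 add0r subr0 bzU.
have hsum : \sum_(i in U) g i - \sum_(i in T0) g i <= 0.
  have H : \sum_i (w i * powR (l2normr (blk x i)) p +
    ((if i \in U then g i else 0) - (if i \in T0 then g i else 0)))
    <= \sum_i w i * powR (l2normr (blk z i)) p by apply: ler_sum => i _; exact: term.
  have e : \sum_i (w i * powR (l2normr (blk x i)) p +
    ((if i \in U then g i else 0) - (if i \in T0 then g i else 0))) =
    wobj p w x + (\sum_(i in U) g i - \sum_(i in T0) g i).
    rewrite big_split sumrB /=; congr (_ + (_ - _)); by rewrite [RHS]big_mkcond.
  have e2 : \sum_i w i * powR (l2normr (blk z i)) p = wobj p w z by [].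
  rewrite e e2 in H; move: H hle; rewrite -/w.
  move: (wobj p w x) (wobj p w z) (\sum_(i in U) g i) (\sum_(i in T0) g i).
  move=> s1 s2 s3 s4 H1 H2; lra.
have split_w : forall S : {set 'I_n}, \sum_(i in S) g i = omega * Fp f p (S :&: Tt) + Fp f p (S :\: Tt).
  move=> S; rewrite (big_setID Tt) /= /Fp mulr_sumr; congr (_ + _).
    apply: eq_bigr => i; rewrite finset.in_setI => /andP[_ iT].
    by rewrite /g /w iT.
  apply: eq_bigr => i; rewrite finset.in_setD => /andP[iT _].
  by rewrite /g /w (negbTE iT) mul1r.
have split_F : forall S : {set 'I_n}, Fp f p S = Fp f p (S :&: Tt) + Fp f p (S :\: Tt).
  by move=> S; rewrite /Fp (big_setID Tt).
have dD : [disjoint T0 :\: Tt & U :&: Tt].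
  rewrite -finset.setI_eq0; apply/eqP/setP => i.
  rewrite !(finset.in_setI, finset.in_setD, inU) finset.in_set0.
  by case: (i \in T0); case: (i \in Tt).
rewrite {3}/Fp sum_setU_disj // -!/(Fp f p _).
move: hsum; rewrite !split_w (split_F U) (split_F T0).
move: (Fp f p (U :&: Tt)) (Fp f p (U :\: Tt)) (Fp f p (T0 :&: Tt)) (Fp f p (T0 :\: Tt)) => b1 b2 a1 a2 H.
rewrite -subr_ge0.
have -> : omega * (a1 + a2) + (1 - omega) * (a2 + b1) - (b1 + b2) =
  - (omega * b1 + b2 - (omega * a1 + a2)) by ring.
by rewrite oppr_ge0.
Qed.

End Extra.

Section Extra2.
Variable R : realType.
Lemma decomp n d (h : 'cV[R]_(n * d)) (f : 'I_n -> R) (T0 : {set 'I_n}) K :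
  h = restr (T0 :|: G f (~: T0) K 0) h + \sum_(j < n) restr (G f (~: T0) K j.+1) h.
Proof.
apply/colP => t; rewrite !mxE summxE.
have e : \sum_(j < n) restr (G f (~: T0) K j.+1) h t 0 =
         \sum_(j < n) (if bof t \in G f (~: T0) K j.+1 then h t 0 else 0).
  by apply: eq_bigr => j _; rewrite mxE.
rewrite e; have := sum_G f (~: T0) K (bof t) (h t 0).
rewrite big_ord_recl /= finset.in_setC finset.in_setU.
case: (boolP (bof t \in T0)) => bT /=.
  move=> _; rewrite big1 ?addr0 // => j _.
  case: ifP => // /(fintype.subsetP (G_sub f (~: T0) K j.+1)).
  by rewrite finset.in_setC bT.
by move=> E; symmetry; exact: E.
Qed.

Lemma tail_sum n (f : 'I_n -> R) (U : {set 'I_n}) K p :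
  \sum_(j < n) Fp f p (G f U K j) <= Fp f p U.
Proof.
apply: (@le_trans _ _ (\sum_(j < n.+1) Fp f p (G f U K j))).
  by rewrite big_ord_recr /= lerDl Fp_ge0.
rewrite /Fp.
under eq_bigr => j _ do rewrite big_mkcond /=.
rewrite [X in _ <= X]big_mkcond /= exchange_big /=.
by apply: ler_sum => i _; rewrite (sum_G f U K i (powR (f i) p)).
Qed.

Lemma stepC m n d p (A : 'M[R]_(m, n * d)) (h : 'cV[R]_(n * d)) (T0 : {set 'I_n}) K s2 e1 e2 :
  0 < p -> p <= 1 -> (0 < K)%N -> A *m h = 0 ->
  (#|T0| + K <= s2)%N ->
  (forall z, block_sparse K z -> pnormp p (A *m z) <= (1 + e1) * powR (l2normc z) p) ->
  (forall z, block_sparse s2 z -> (1 - e2) * powR (l2normc z) p <= pnormp p (A *m z)) ->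
  0 <= 1 + e1 ->
  (1 - e2) * powR (Qs (T0 :|: G (fun i => l2normr (blk h i)) (~: T0) K 0) h) (p / 2) <=
  (1 + e1) * (powR K%:R (p / 2 - 1) * Fp (fun i => l2normr (blk h i)) p (~: T0)).
Proof.
move=> p0 p1 K0 hAh hs2 up lo e10.
pose f := fun i => l2normr (blk h i).
have f0 : forall i, 0 <= f i by move=> i; exact: l2normr_ge0.
pose U := ~: T0.
pose T01 := T0 :|: G f U K 0.
have hdec := decomp h f T0 K.
have hA : A *m restr T01 h = - \sum_(j < n) A *m restr (G f U K j.+1) h.
  by apply/eqP; rewrite -addr_eq0 -mulmx_sumr -mulmxDr -hdec hAh.
have sp : block_sparse s2 (restr T01 h).
  apply: restr_sparse; apply: leq_trans hs2; rewrite cardsU.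
  apply: leq_trans (leq_subr _ _) _; rewrite leq_add2l; exact: G_card.
have := lo _ sp; rewrite powR_l2normc_restr => H1.
apply: le_trans H1 _; rewrite hA pnormpN.
apply: le_trans (pnormp_sum _ p0 p1) _.
apply: (@le_trans _ _ (\sum_(j < n) (1 + e1) * (powR K%:R (p / 2 - 1) * Fp f p (G f U K j)))).
  apply: ler_sum => j _.
  have sj : block_sparse K (restr (G f U K j.+1) h) by apply: restr_sparse; exact: G_card.
  apply: le_trans (up _ sj) _; rewrite powR_l2normc_restr ler_wpM2l //.
  exact: (G_tail U K0 f0 j p0).
rewrite -mulr_sumr ler_wpM2l // -mulr_sumr ler_wpM2l ?powR_ge0 //.
exact: tail_sum.
Qed.
End Extra2.

Section StepB.
Variable R : realType.

Lemma holdFp n d (h : 'cV[R]_(n * d)) p (S : {set 'I_n}) : 0 < p -> p <= 1 ->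
  Fp (fun i => l2normr (blk h i)) p S <=
    powR #|S|%:R (1 - p / 2) * powR (Qs S h) (p / 2).
Proof.
move=> p0 p1; rewrite /Fp.
have -> : \sum_(i in S) powR (l2normr (blk h i)) p =
          \sum_(i in S) powR (l2normr (blk h i) ^+ 2) (p / 2).
  by apply: eq_bigr => i _; rewrite powR_sq_half // l2normr_ge0.
apply: (@holder_powR R (p / 2) _ S (fun i => l2normr (blk h i) ^+ 2)).
- by rewrite divr_gt0.
- rewrite ltr_pdivrMr //; lra.
- by move=> i; rewrite sqr_ge0.
Qed.

Lemma stepB n d (h : 'cV[R]_(n * d)) (T0 Tt : {set 'I_n}) p k K (rho t : R) :
  0 < p -> p <= 1 -> (0 < K)%N -> (#|T0| <= k)%N ->
  #|Tt|%:R = rho * k%:R -> #|Tt :&: T0|%:R = t * k%:R ->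
  rho * k%:R - t * k%:R <= K%:R ->
  let f := fun i => l2normr (blk h i) in
  let X := Qs (T0 :|: G f (~: T0) K 0) h in
  Qs T0 h <= X /\
  Fp f p T0 <= powR k%:R (1 - p / 2) * powR X (p / 2) /\
  Fp f p ((T0 :\: Tt) :|: (~: T0 :&: Tt)) <=
     powR (k%:R + rho * k%:R - 2 * (t * k%:R)) (1 - p / 2) * powR X (p / 2).
Proof.
move=> p0 p1 K0 hT0 hTt hc hK f X.
have f0 : forall i, 0 <= f i by move=> i; exact: l2normr_ge0.
pose U := ~: T0.
pose G0 := G f U K 0.
have q0 : 0 <= p / 2 by rewrite divr_ge0 // ltW.
have q1 : 0 <= 1 - p / 2 by rewrite subr_ge0 ler_pdivrMr //; lra.
have Q0 : forall S, 0 <= Qs S h by move=> S; exact: Qs_ge0.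
have inU : forall i, (i \in U) = (i \notin T0) by move=> i; rewrite finset.in_setC.
have dG : [disjoint T0 & G0].
  rewrite -finset.setI_eq0; apply/eqP/setP => i; rewrite finset.in_setI finset.in_set0.
  case: (boolP (i \in G0)) => iG; rewrite ?andbF // andbT.
  by move/(fintype.subsetP (G_sub f U K 0)): iG; rewrite inU => /negbTE.
have hX : X = Qs T0 h + Qs G0 h by rewrite /X /Qs sum_setU_disj.
split; first by rewrite hX lerDl.
split.
  apply: le_trans (holdFp _ _ p0 p1) _.
  apply: ler_pM; rewrite ?powR_ge0 //.
    by apply: powR_mono => //; rewrite ler_nat.
  apply: powR_mono => //; rewrite hX lerDl //.
pose D := (T0 :\: Tt) :|: (U :&: Tt).
have dD : [disjoint T0 :\: Tt & U :&: Tt].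
  rewrite -finset.setI_eq0; apply/eqP/setP => i.
  rewrite !(finset.in_setI, finset.in_setD, inU) finset.in_set0.
  by case: (i \in T0); case: (i \in Tt).
have eUT : U :&: Tt = Tt :\: T0 by rewrite finset.setDE finset.setIC.
have cUT : (#|U :&: Tt|%:R : R) = rho * k%:R - t * k%:R.
  have := cardsID T0 Tt; rewrite -eUT => /(congr1 (fun m => m%:R : R)).
  rewrite natrD hTt hc => <-; ring.
have cT0 : (#|T0 :\: Tt|%:R : R) = #|T0|%:R - t * k%:R.
  have := cardsID Tt T0; rewrite finset.setIC => /(congr1 (fun m => m%:R : R)).
  rewrite natrD hc => <-; ring.
have cD : (#|D|%:R : R) <= k%:R + rho * k%:R - 2 * (t * k%:R).
  have := cardsUI (T0 :\: Tt) (U :&: Tt).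
  rewrite (disjoint_setI0 dD) cards0 addn0 => /(congr1 (fun m => m%:R : R)).
  rewrite natrD cUT cT0 -/D => ->.
  have : (#|T0|%:R : R) <= k%:R by rewrite ler_nat.
  lra.
have hBK : (#|U :&: Tt| <= K)%N by rewrite -(ler_nat R) cUT.
have QD : Qs D h <= X.
  rewrite /Qs sum_setU_disj // -!/(Qs _ h) hX.
  apply: lerD.
    by rewrite [X in _ <= X]/Qs (big_setID Tt) /= lerDr; apply: Q0.
  apply: (G_largest K0 (g := fun i => f i ^+ 2)).
  - by move=> i; rewrite sqr_ge0.
  - by move=> u v huv; rewrite ler_sqr ?nnegrE.
  - exact: finset.subsetIl.
  - exact: hBK.
apply: le_trans (holdFp _ _ p0 p1) _.
apply: ler_pM; rewrite ?powR_ge0 //.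
  by apply: powR_mono.
by apply: powR_mono.
Qed.

End StepB.

Unset Implicit Arguments.

Theorem corollary1 (R : realType) (p : R) (m n d k : nat)
  (A : 'M[R]_(m, n * d)) (x : 'cV[R]_(n * d))
  (Tt : {set 'I_n}) (rho alpha omega : R) (a : nat) :
  0 < p -> p <= 1 ->
  (0 < k)%N ->
  block_sparse k x ->
  0 <= rho -> 0 <= alpha ->
  (#|Tt|)%:R = rho * k%:R ->
  (#|Tt :&: block_support x|)%:R = alpha * rho * k%:R ->
  0 <= omega -> omega <= 1 ->
  let gamma := omega + (1 - omega) * powR (1 + rho - 2 * alpha * rho) (1 - p / 2) in
  (1 - alpha) * rho <= a%:R -> (1 < a)%N ->
  block_pRIC p A (a * k) + powR a%:R (1 - p / 2) / gamma * block_pRIC p A (a.+1 * k)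
    < powR a%:R (1 - p / 2) / gamma - 1 ->
  let w := fun i : 'I_n => if i \in Tt then omega else 1 in
  forall z : 'cV[R]_(n * d), A *m z = A *m x -> z != x ->
    wobj p w x < wobj p w z.
Proof.
move=> p0 p1 k0 xs rho0 alpha0 hTt hTT0 om0 om1 gamma ha a1 hric w z hAz hzx.
set d1 := block_pRIC p A (a * k) in hric.
set d2 := block_pRIC p A (a.+1 * k) in hric.
set c := powR a%:R (1 - p / 2) / gamma in hric.
have d10 : 0 <= d1 by apply: pRIC_ge0.
have d20 : 0 <= d2 by apply: pRIC_ge0.
have g0 : 0 <= gamma.
  by rewrite /gamma addr_ge0 // mulr_ge0 ?powR_ge0 // subr_ge0.
have [gz|gpos] := eqVneq gamma 0.
  by move: hric; rewrite /c gz invr0 mulr0 mul0r; lra.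
have gp : 0 < gamma by rewrite lt_neqAle eq_sym gpos.
have c0 : 0 <= c by rewrite /c divr_ge0 ?powR_ge0 // ltW.
set eps := (c - 1 - d1 - c * d2) / (1 + c).
have c1 : 0 < 1 + c by lra.
have heps : eps + c * eps = c - 1 - d1 - c * d2.
  by rewrite -[X in X + _]mul1r -mulrDl /eps mulrCA mulfV ?mulr1 // gt_eqF.
have eps0 : 0 < eps by rewrite /eps divr_gt0 //; lra.
have [e1 He1 le1] := pRIC_approx p0 p1 A (a * k) eps0.
have [e2 He2 le2] := pRIC_approx p0 p1 A (a.+1 * k) eps0.
have hce : c * e2 <= c * d2 + c * eps by rewrite -mulrDr ler_wpM2l // ltW.
have hE : e1 + c * e2 < c - 1 by lra.
case: He1 => e1p He1; case: He2 => e2p He2.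
rewrite ltNge; apply/negP => hle.
have hA := stepA p0 p1 om0 om1 hle.
pose T0 := block_support x.
pose h := z - x.
rewrite -/h -/T0 in hA.
pose K := (a * k)%N.
have K0 : (0 < K)%N by rewrite /K muln_gt0 k0 andbT ltnW.
have hAh : A *m h = 0 by rewrite /h mulmxBr hAz subrr.
pose t := alpha * rho.
have hc : (#|Tt :&: T0|%:R : R) = t * k%:R by rewrite hTT0.
have kR : (0 : R) < k%:R by rewrite ltr0n.
have hK : rho * k%:R - t * k%:R <= K%:R.
  rewrite /K natrM.
  have H := ler_wpM2r (ler0n R k) ha.
  have -> : rho * k%:R - t * k%:R = (1 - alpha) * rho * k%:R by rewrite /t; ring.
  exact: H.
have [hQT0 [hB1 hB2]] := stepB h (T0 := T0) (Tt := Tt) p0 p1 K0 xs hTt hc hK.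
have hs2 : (#|T0| + K <= a.+1 * k)%N by rewrite /K mulSn leq_add2r.
have up : forall z0, block_sparse K z0 -> pnormp p (A *m z0) <= (1 + e1) * powR (l2normc z0) p.
  by move=> z0 /He1 [].
have lo : forall z0, block_sparse (a.+1 * k) z0 -> (1 - e2) * powR (l2normc z0) p <= pnormp p (A *m z0).
  by move=> z0 /He2 [].
have e10 : 0 <= 1 + e1 by rewrite addr_ge0 // ltW.
have hC := stepC (A := A) (h := h) (T0 := T0) p0 p1 K0 hAh hs2 up lo e10.
move: hA hB1 hB2 hC hQT0.
set f := fun i => l2normr (blk h i).
set X := Qs (T0 :|: G f (~: T0) K 0) h.
set FU := Fp f p (~: T0).
set FT := Fp f p T0.
set FD := Fp f p _.
move=> hA hB1 hB2 hC hQT0.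
set q := p / 2 in hB1 hB2 hC.
pose P := powR X q.
have ht1 : t <= 1.
  rewrite -(ler_pM2r kR) mul1r -hc ler_nat; apply: leq_trans xs.
  exact: subset_leq_card (finset.subsetIr _ _).
have ht2 : t <= rho.
  rewrite -(ler_pM2r kR) -hc -hTt ler_nat.
  exact: subset_leq_card (finset.subsetIl _ _).
have b0 : 0 <= 1 + rho - 2 * t by lra.
have pk0 : 0 <= powR k%:R (1 - q) by exact: powR_ge0.
have eD : powR (k%:R + rho * k%:R - 2 * (t * k%:R)) (1 - q) =
          powR (1 + rho - 2 * t) (1 - q) * powR k%:R (1 - q).
  rewrite -powRM ?(ltW kR) //; congr powR; ring.
rewrite eD in hB2.
have hg : gamma = omega + (1 - omega) * powR (1 + rho - 2 * t) (1 - q).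
  by rewrite /gamma /t /q mulrA.
have hFU : FU <= gamma * powR k%:R (1 - q) * P.
  apply: le_trans hA _.
  have h1 := ler_wpM2l om0 hB1.
  have h2 : (1 - omega) * FD <= (1 - omega) * (powR (1 + rho - 2 * t) (1 - q) * powR k%:R (1 - q) * P).
    by apply: ler_wpM2l; [lra | exact: hB2].
  apply: le_trans (lerD h1 h2) _.
  by rewrite hg /P; rewrite le_eqVlt; apply/orP; left; apply/eqP; ring.
have FU0 : 0 <= FU by exact: Fp_ge0.
have P0 : 0 <= P by exact: powR_ge0.
have hKk : powR K%:R (q - 1) * powR k%:R (1 - q) = powR a%:R (q - 1).
  have e0 : q - 1 + (1 - q) = 0 by ring.
  rewrite /K natrM powRM ?ler0n // -mulrA -powRD; last by rewrite (gt_eqF kR) implybT.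
  by rewrite e0 powRr0 mulr1.
have hC2 : (1 - e2) * P <= (1 + e1) * (gamma * powR a%:R (q - 1)) * P.
  apply: le_trans hC _.
  rewrite -mulrA ler_wpM2l //.
  apply: le_trans (ler_wpM2l (powR_ge0 _ _) hFU) _.
  rewrite -hKk; rewrite le_eqVlt; apply/orP; left; apply/eqP; ring.
have [Pz|Pp] := eqVneq P 0.
  have X0 : X = 0 by apply: (powR_eq0_eq0 (p := q)).
  have FUz : FU = 0.
    apply/eqP; rewrite eq_le FU0 andbT; apply: le_trans hFU _; by rewrite Pz mulr0.
  have QT0 : Qs T0 h = 0 by apply/eqP; rewrite eq_le Qs_ge0 andbT -X0.
  have fz : forall i, f i = 0.
    move=> i; case: (boolP (i \in T0)) => iT.
      have := psumr_eq0P (fun i _ => sqr_ge0 (l2normr (blk h i))) QT0 iT.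
      by move/eqP; rewrite sqrf_eq0 => /eqP.
    have iU : i \in ~: T0 by rewrite finset.in_setC.
    have := psumr_eq0P (fun i _ => powR_ge0 (f i) p) FUz iU.
    exact: powR_eq0_eq0.
  have hl : l2normc h = 0.
    rewrite -(restrT h) l2normc_restr /Qs big1 ?sqrtr0 // => i _.
    by have := fz i; rewrite /f => ->; rewrite expr0n.
  have h0 : h = 0.
    apply/colP => i; have := entry_le_l2normc h i; rewrite hl normr_le0 => /eqP ->.
    by rewrite mxE.
  by move: hzx; rewrite (subr0_eq h0) eqxx.
have Ppos : 0 < P by rewrite lt_neqAle eq_sym Pp.
rewrite ler_pM2r // in hC2.
have cY : c * (gamma * powR a%:R (q - 1)) = 1.
  have e0 : 1 - q + (q - 1) = 0 by ring.
  have an : (a%:R : R) != 0 by rewrite pnatr_eq0 -lt0n ltnW.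
  rewrite /c mulrA divfK ?gt_eqF // -powRD; last by rewrite an implybT.
  by rewrite -/q e0 powRr0.
have H := ler_wpM2l c0 hC2; rewrite mulrCA cY mulr1 mulrBr mulr1 in H.
move: H hE; move: (c * e2) => ce2; clear; lra.
Qed.
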